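(* Let $H=\{\cdot\mid 1\}$ and let $\mathcal{U}=\mathcal{D}(H)$. Then $H\equiv_\mathcal{U}0$.
   Context: Games are finite partizan games; $1=\{0\mid\cdot\}$, and $\{\cdot\mid 1\}$ is the game with no Left option and sole Right option $1$. $o(G)$ is the misère outcome class (ordered $\mathscr{L}>\mathscr{N}>\mathscr{R}$, $\mathscr{L}>\mathscr{P}>\mathscr{R}$). A universe is a set of games closed under options, disjunctive sums, conjugates, and forming $\{\mathscr{G}^L\mid\mathscr{G}^R\}$ from nonempty finite subsets of it; $\mathcal{D}(\mathcal{A})$ is the smallest universe containing $\mathcal{A}$. $G\equiv_\mathcal{U}H$ means $o(G+X)=o(H+X)$ for all $X\in\mathcal{U}$. *)

(* Defs.v *)
From Stdlib Require Import List Bool.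
Import ListNotations.

Inductive game : Type := Game : list game -> list game -> game.

Definition lopts (G : game) : list game := match G with Game L _ => L end.
Definition ropts (G : game) : list game := match G with Game _ R => R end.

Definition zero : game := Game [] [].
Definition one : game := Game [zero] [].

(* Misère play: (Left wins moving first, Right wins moving first).
   A player with no move on their turn wins. *)
Fixpoint wins (G : game) : bool * bool :=
  match G with
  | Game L R =>
      ((match L with [] => true | _ => false end)
         || existsb (fun g => negb (snd (wins g))) L,
       (match R with [] => true | _ => false end)
         || existsb (fun g => negb (fst (wins g))) R)
  end.

Inductive outcome : Type := OL | ON | OP | OR.

Definition o (G : game) : outcome :=
  match wins G with
  | (true, false) => OL
  | (true, true) => ON
  | (false, false) => OP
  | (false, true) => OR
  end.

Fixpoint gadd (G : game) : game -> game :=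
  fix gaddG (H : game) : game :=
    match G, H with
    | Game gl gr, Game hl hr =>
        Game (map (fun g => gadd g H) gl ++ map gaddG hl)
             (map (fun g => gadd g H) gr ++ map gaddG hr)
    end.

Fixpoint gconj (G : game) : game :=
  match G with Game L R => Game (map gconj R) (map gconj L) end.

Definition universe (U : game -> Prop) : Prop :=
  (forall G g, U G -> In g (lopts G) -> U g) /\
  (forall G g, U G -> In g (ropts G) -> U g) /\
  (forall G H, U G -> U H -> U (gadd G H)) /\
  (forall G, U G -> U (gconj G)) /\
  (forall S T, S <> [] -> T <> [] ->
     (forall g, In g S -> U g) -> (forall g, In g T -> U g) -> U (Game S T)).

(* D(A): the smallest universe containing A *)
Definition Dcl (A : game -> Prop) (G : game) : Prop :=
  forall U, universe U -> (forall X, A X -> U X) -> U G.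

Definition equivU (U : game -> Prop) (G H : game) : Prop :=
  forall X, U X -> o (gadd G X) = o (gadd H X).

(* Main.v *)
Require Import Defs.
From Stdlib Require Import List Bool.
Import ListNotations.

Definition isnil {A} (l : list A) := match l with [] => true | _ => false end.

Lemma wins_eq L R : wins (Game L R) =
  (isnil L || existsb (fun g => negb (snd (wins g))) L,
   isnil R || existsb (fun g => negb (fst (wins g))) R).
Proof. reflexivity. Qed.

Lemma gadd_eq gl gr hl hr : gadd (Game gl gr) (Game hl hr) =
  Game (map (fun g => gadd g (Game hl hr)) gl ++ map (gadd (Game gl gr)) hl)
       (map (fun g => gadd g (Game hl hr)) gr ++ map (gadd (Game gl gr)) hr).
Proof. reflexivity. Qed.

Definition game_ind' (P : game -> Prop)
  (f : forall L R, Forall P L -> Forall P R -> P (Game L R)) : forall G, P G :=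
  fix F G := match G with Game L R =>
    f L R ((fix FL l := match l return Forall P l with
              [] => Forall_nil _ | x :: t => Forall_cons x (F x) (FL t) end) L)
          ((fix FL l := match l return Forall P l with
              [] => Forall_nil _ | x :: t => Forall_cons x (F x) (FL t) end) R) end.

Lemma existsb_ext_in {A} (f g : A -> bool) l :
  (forall x, In x l -> f x = g x) -> existsb f l = existsb g l.
Proof.
  induction l as [|a l IH]; simpl; intros H; auto.
  rewrite H by auto. rewrite IH by auto. reflexivity.
Qed.

Lemma existsb_false {A} (f : A -> bool) l :
  (forall x, In x l -> f x = false) -> existsb f l = false.
Proof.
  induction l as [|a l IH]; simpl; intros H; auto.
  rewrite H by auto. apply IH; auto.
Qed.

Lemma existsb_map {A B} (f : A -> B) (p : B -> bool) l :
  existsb p (map f l) = existsb (fun x => p (f x)) l.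
Proof. induction l; simpl; congruence. Qed.

Lemma isnil_map {A B} (f : A -> B) l : isnil (map f l) = isnil l.
Proof. destruct l; reflexivity. Qed.

Lemma wins_zero X : wins (gadd zero X) = wins X.
Proof.
  induction X as [L R HL HR] using game_ind'.
  unfold zero. rewrite gadd_eq. simpl app.
  rewrite !wins_eq, !isnil_map, !existsb_map.
  rewrite Forall_forall in HL, HR.
  f_equal; f_equal; apply existsb_ext_in; intros x Hx; simpl.
  - rewrite HL; auto.
  - rewrite HR; auto.
Qed.

Inductive PR : game -> Prop :=
| PR_intro : forall L, (forall g, In g L -> PRopt g) -> PR (Game L [])
with PRopt : game -> Prop :=
| PRo_end : forall L, PRopt (Game L [])
| PRo_resp : forall g h, In h (ropts g) -> PR h -> PRopt g.

Scheme PR_mut := Minimality for PR Sort Prop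
with PRo_mut := Minimality for PRopt Sort Prop.

Lemma gadd_one_eq L R : gadd one (Game L R) =
  Game (gadd zero (Game L R) :: map (gadd one) L) (map (gadd one) R).
Proof. reflexivity. Qed.

Lemma PR_one Y : PR Y -> fst (wins (gadd one Y)) = false.
Proof.
  intros HY.
  apply (PR_mut (fun Y => fst (wins (gadd one Y)) = false)
                (fun g => snd (wins (gadd one g)) = true)); [| | |exact HY].
  - intros L _ IH. rewrite gadd_one_eq, wins_eq. cbn [fst existsb isnil orb].
    rewrite wins_zero. cbn [snd wins existsb isnil orb negb].
    rewrite existsb_map. apply existsb_false. intros x Hx.
    rewrite (IH x Hx). reflexivity.
  - intros L. reflexivity.
  - intros [gl gr] h Hin _ IH. rewrite gadd_one_eq, wins_eq. cbn [snd].
    apply orb_true_iff. right.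
    apply existsb_exists. exists (gadd one h). split.
    + apply in_map. exact Hin.
    + rewrite IH. reflexivity.
Qed.

Lemma one_left X : fst (wins (gadd one X)) = false -> snd (wins X) = true.
Proof.
  destruct X as [L R]. rewrite gadd_one_eq, wins_eq. cbn [fst existsb isnil orb].
  rewrite wins_zero. intros H.
  destruct (snd (wins (Game L R))); auto.
Qed.

Lemma PR_add Y : PR Y -> forall Z, PR Z -> PR (gadd Y Z).
Proof.
  intros HY.
  apply (PR_mut (fun Y => forall Z, PR Z -> PR (gadd Y Z))
                (fun g => forall Z, PR Z -> PRopt (gadd g Z))); [| | |exact HY].
  - intros L HL IHL Z HZ.
    apply (PR_mut (fun Z => PR (gadd (Game L []) Z))
                  (fun m => PRopt (gadd (Game L []) m))); [| | |exact HZ].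
    + intros M HM IHM. rewrite gadd_eq. simpl app at 2.
      constructor. intros x Hx. apply in_app_or in Hx as [Hx|Hx];
        apply in_map_iff in Hx as [y [<- Hy]]; auto.
      apply IHL; auto. constructor; auto.
    + intros M. rewrite gadd_eq. simpl app at 2. constructor.
    + intros [ml mr] h Hin _ IH. apply (PRo_resp _ (gadd (Game L []) h)).
      * rewrite gadd_eq. cbn [ropts map app]. apply in_map. exact Hin.
      * exact IH.
  - intros L [zl zr] HZ. inversion HZ; subst. rewrite gadd_eq. simpl app at 2.
    constructor.
  - intros [gl gr] h Hin _ IH Z HZ. inversion HZ; subst.
    apply (PRo_resp _ (gadd h (Game L []))).
    + rewrite gadd_eq. cbn [ropts map app]. rewrite app_nil_r. exact (in_map (fun g => gadd g (Game L [])) _ _ Hin).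
    + apply IH. exact HZ.
Qed.

Lemma conj_add G : forall K, gconj (gadd G K) = gadd (gconj G) (gconj K).
Proof.
  induction G as [gl gr HL HR] using game_ind'.
  intros K. induction K as [hl hr KL KR] using game_ind'.
  rewrite Forall_forall in HL, HR, KL, KR.
  rewrite gadd_eq. simpl gconj. rewrite gadd_eq.
  rewrite !map_app, !map_map. f_equal; f_equal; apply map_ext_in; intros x Hx.
  - rewrite HR; auto.
  - apply KR; auto.
  - rewrite HL; auto.
  - apply KL; auto.
Qed.

Lemma conj_conj G : gconj (gconj G) = G.
Proof.
  induction G as [L R HL HR] using game_ind'.
  rewrite Forall_forall in HL, HR. simpl. rewrite !map_map.
  f_equal; rewrite <- map_id; apply map_ext_in; auto.
Qed.

Inductive U : game -> Prop :=
| U_intro : forall L R,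
    (R = [] -> PR (Game L R)) -> (L = [] -> PR (gconj (Game L R))) ->
    (forall g, In g L -> U g) -> (forall g, In g R -> U g) -> U (Game L R).

Lemma U_add G : U G -> forall K, U K -> U (gadd G K).
Proof.
  intros HG. induction HG as [L R hR hL hUL IHL hUR IHR].
  intros K HK. induction HK as [M N kR kL kUL IHM kUR IHN].
  rewrite gadd_eq. constructor.
  - intros E. apply app_eq_nil in E as [E1 E2].
    apply map_eq_nil in E1, E2. subst.
    rewrite <- gadd_eq. apply PR_add; auto.
  - intros E. apply app_eq_nil in E as [E1 E2].
    apply map_eq_nil in E1, E2. subst.
    rewrite <- gadd_eq, conj_add. apply PR_add; auto.
  - intros x Hx. apply in_app_or in Hx as [Hx|Hx];
      apply in_map_iff in Hx as [y [<- Hy]]; auto.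
    apply IHL; auto. constructor; auto.
  - intros x Hx. apply in_app_or in Hx as [Hx|Hx];
      apply in_map_iff in Hx as [y [<- Hy]]; auto.
    apply IHR; auto. constructor; auto.
Qed.

Lemma U_conj G : U G -> U (gconj G).
Proof.
  intros HG. induction HG as [L R hR hL hUL IHL hUR IHR].
  simpl. constructor.
  - intros E. apply map_eq_nil in E. subst. apply hL. reflexivity.
  - intros E. apply map_eq_nil in E. subst. rewrite <- (conj_conj (Game L [])) in hR.
    simpl in hR |- *. apply hR. reflexivity.
  - intros x Hx. apply in_map_iff in Hx as [y [<- Hy]]; auto.
  - intros x Hx. apply in_map_iff in Hx as [y [<- Hy]]; auto.
Qed.

Lemma U_universe : universe U.
Proof.
  unfold universe; split; [|split; [|split; [|split]]].
  - intros [L R] g HG Hg. inversion HG; subst. auto.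
  - intros [L R] g HG Hg. inversion HG; subst. auto.
  - intros; apply U_add; auto.
  - apply U_conj.
  - intros S0 T0 HS HT HS2 HT2. constructor; auto; intros E; congruence.
Qed.

Lemma U_zero : U zero.
Proof.
  constructor; simpl; try tauto.
  - intros _. constructor. simpl; tauto.
  - intros _. constructor. simpl; tauto.
Qed.

Lemma U_one : U one.
Proof.
  constructor; simpl.
  - intros _. constructor. intros g [<-|[]]. constructor.
  - discriminate.
  - intros g [<-|[]]. apply U_zero.
  - tauto.
Qed.

Lemma U_H : U (Game [] [one]).
Proof.
  constructor; simpl.
  - discriminate.
  - intros _. constructor. intros g [<-|[]].
    apply (PRo_resp _ zero). simpl; auto. constructor. simpl; tauto.
  - tauto.
  - intros g [<-|[]]. apply U_one.
Qed.

Lemma gadd_H_eq L R : gadd (Game [] [one]) (Game L R) =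
  Game (map (gadd (Game [] [one])) L)
       (gadd one (Game L R) :: map (gadd (Game [] [one])) R).
Proof. reflexivity. Qed.

Lemma main_wins X : U X -> wins (gadd (Game [] [one]) X) = wins X.
Proof.
  intros HX. induction HX as [L R hR hL hUL IHL hUR IHR].
  rewrite gadd_H_eq, (wins_eq _ (_ :: _)), (wins_eq L R), isnil_map, !existsb_map.
  f_equal.
  - f_equal. apply existsb_ext_in; intros x Hx. rewrite IHL; auto.
  - cbn [isnil orb existsb].
    rewrite existsb_map, (existsb_ext_in _ (fun g => negb (fst (wins g))) R)
      by (intros x Hx; rewrite IHR; auto).
    destruct R as [|r R'].
    + rewrite PR_one; auto.
    + cbn [isnil orb].
      destruct (fst (wins (gadd one (Game L (r :: R'))))) eqn:E; cbn [negb orb]; auto.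
      apply one_left in E. rewrite wins_eq in E. cbn [snd isnil orb] in E. rewrite E. reflexivity.
Qed.

Theorem mainTheorem18 :
  let H := Game [] [one] in
  equivU (Dcl (fun X => X = H)) H zero.
Proof.
  intros H X HX.
  assert (UX : U X) by (apply HX; [apply U_universe | intros Y ->; apply U_H]).
  unfold o. rewrite wins_zero. unfold H. rewrite main_wins; auto.
Qed.
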